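(* Let $(\mathbf{x}^*,\boldsymbol{\lambda}^* )$ be a saddle point ($\mathcal{A}(\mathbf{x}^* )=\mathbf{b}$ and $-\mathcal{A}_i^T(\boldsymbol{\lambda}^* )\in\partial f_i(\mathbf{x}_i^* )$ for all $i$), and let the iterates be generated by the Fast PL-ADMM-PS algorithm. Suppose $X$ is a bounded set containing $\mathbf{x}^*$ and all $\mathbf{z}^k$ ($k\ge0$), with diameter $D_X=\sup_{\mathbf{u},\mathbf{v}\in X}\|\mathbf{u}-\mathbf{v}\|$, and $\Lambda$ is a bounded set containing $\boldsymbol{\lambda}^*$ and all $\boldsymbol{\lambda}^k$ ($k\ge0$), with diameter $D_\Lambda$. Let $$\alpha=\min\Bigl\{\frac{1}{n+1},\ \frac{\eta_i-n\|\mathcal{A}_i\|^2}{2(n+1)\|\mathcal{A}_i\|^2}\ (i=1,\dots,n)\Bigr\},\quad L_{\max}=\max_i L_i,\quad \eta_{\max}=\max_i\eta_i.$$ Then for every $K>0$, with $f(\mathbf{x})=\sum_i f_i(\mathbf{x}_i)$, $$f(\mathbf{x}^{K+1})-f(\mathbf{x}^* )+\langle\boldsymbol{\lambda}^*,\mathcal{A}(\mathbf{x}^{K+1})-\mathbf{b}\rangle+\frac{\beta\alpha}{2}\|\mathcal{A}(\mathbf{x}^{K+1})-\mathbf{b}\|^2\le\frac{2L_{\max}\|\mathbf{z}^0-\mathbf{x}^*\|^2}{(K+2)^2}+\frac{2\beta\eta_{\max}D_X^2}{K+2}+\frac{2D_\Lambda^2}{\beta(K+2)}.$$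
   Context: Setting: finite-dimensional real inner product spaces with induced norms $\|\cdot\|$. Problem: $\min\sum_{i=1}^n f_i(\mathbf{x}_i)$, $f_i=g_i+h_i$, subject to $\mathcal{A}(\mathbf{x}):=\sum_{i=1}^n\mathcal{A}_i(\mathbf{x}_i)=\mathbf{b}$, where $\mathbf{x}=(\mathbf{x}_1,\dots,\mathbf{x}_n)$, each $g_i,h_i$ is proper convex lower semicontinuous, $g_i$ is differentiable with $L_i$-Lipschitz gradient ($L_i>0$), each $\mathcal{A}_i$ is a nonzero linear map (adjoint $\mathcal{A}_i^T$, operator norm $\|\mathcal{A}_i\|$) into a common space. Fast PL-ADMM-PS: fix $\beta>0$ and $\eta_i>n\|\mathcal{A}_i\|^2$; given $\mathbf{x}^0,\mathbf{z}^0,\boldsymbol{\lambda}^0$ and $\theta^{(0)}=1$, for $k=0,1,2,\dots$, for each $i=1,\dots,n$ (in parallel): $\mathbf{y}_i^{k+1}=(1-\theta^{(k)})\mathbf{x}_i^k+\theta^{(k)}\mathbf{z}_i^k$; $\mathbf{z}_i^{k+1}=\arg\min_{\mathbf{x}_i}\ \langle\nabla g_i(\mathbf{y}_i^{k+1}),\mathbf{x}_i\rangle+h_i(\mathbf{x}_i)+\langle\boldsymbol{\lambda}^k,\mathcal{A}_i(\mathbf{x}_i)\rangle+\langle\beta\mathcal{A}_i^T(\mathcal{A}(\mathbf{z}^k)-\mathbf{b}),\mathbf{x}_i\rangle+\frac{L_i\theta^{(k)}+\beta\eta_i}{2}\|\mathbf{x}_i-\mathbf{z}_i^k\|^2$;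 $\mathbf{x}_i^{k+1}=(1-\theta^{(k)})\mathbf{x}_i^k+\theta^{(k)}\mathbf{z}_i^{k+1}$; then $\boldsymbol{\lambda}^{k+1}=\boldsymbol{\lambda}^k+\beta(\mathcal{A}(\mathbf{z}^{k+1})-\mathbf{b})$ and $\theta^{(k+1)}=\frac{-(\theta^{(k)})^2+\sqrt{(\theta^{(k)})^4+4(\theta^{(k)})^2}}{2}$. (The paper writes the first term as $2L_{\max}D_{\mathbf{x}^*}^2/(K+2)^2$ with $D_{\mathbf{x}^*}$ the initial distance to $\mathbf{x}^*$, implicitly taking $\mathbf{z}^0=\mathbf{x}^0$.) *)

(* Defs.v *)
From Stdlib Require Import Reals.
From mathcomp Require Import all_boot.
Set Implicit Arguments. Unset Strict Implicit. Unset Printing Implicit Defensive.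
Open Scope R_scope.

Definition vec (d : nat) := 'I_d -> R.
Definition vzero d : vec d := fun _ => 0.
Definition vadd d (u v : vec d) : vec d := fun j => u j + v j.
Definition vsub d (u v : vec d) : vec d := fun j => u j - v j.
Definition vscale d (a : R) (u : vec d) : vec d := fun j => a * u j.
Definition dot d (u v : vec d) : R := \big[Rplus/0]_(j < d) (u j * v j).
Definition vnorm d (u : vec d) : R := sqrt (dot u u).

Definition linmap (m p : nat) := 'I_m -> 'I_p -> R.
Definition lapp m p (A : linmap m p) (u : vec p) : vec m :=
  fun r => \big[Rplus/0]_(j < p) (A r j * u j).
Definition ladj m p (A : linmap m p) (w : vec m) : vec p :=
  fun j => \big[Rplus/0]_(r < m) (A r j * w r).
Definition is_opnorm m p (A : linmap m p) (nA : R) : Prop :=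
  is_lub (fun t => exists u : vec p, vnorm u <= 1 /\ t = vnorm (lapp A u)) nA.

Definition bvec (n : nat) (d : 'I_n -> nat) := forall i : 'I_n, vec (d i).
Definition bsub n (d : 'I_n -> nat) (u v : bvec d) : bvec d :=
  fun i => vsub (u i) (v i).
Definition bdot n (d : 'I_n -> nat) (u v : bvec d) : R :=
  \big[Rplus/0]_(i < n) dot (u i) (v i).
Definition bnorm n (d : 'I_n -> nat) (u : bvec d) : R := sqrt (bdot u u).

Definition Aop n (d : 'I_n -> nat) m (A : forall i : 'I_n, linmap m (d i))
  (x : bvec d) : vec m :=
  \big[(@vadd m)/(@vzero m)]_(i < n) lapp (A i) (x i).

Definition is_diam (T : Type) (nrm : T -> T -> R) (S : T -> Prop) (D : R) :=
  is_lub (fun t => exists u v, S u /\ S v /\ t = nrm u v) D.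
Definition bounded_set (T : Type) (nrm : T -> R) (S : T -> Prop) :=
  exists M, forall u, S u -> nrm u <= M.

Inductive ereal := Fin (r : R) | PInf.
Definition eadd (a b : ereal) : ereal :=
  match a, b with Fin x, Fin y => Fin (x + y) | _, _ => PInf end.
Definition ele (a b : ereal) : Prop :=
  match a, b with
  | Fin x, Fin y => x <= y
  | _, PInf => True
  | PInf, Fin _ => False
  end.
Definition real_of (a : ereal) : R := match a with Fin x => x | PInf => 0 end.

Definition proper_e d (h : vec d -> ereal) := exists u, h u <> PInf.
Definition convex_e d (h : vec d -> ereal) :=
  forall u v t a c, 0 <= t <= 1 -> h u = Fin a -> h v = Fin c ->
    ele (h (vadd (vscale t u) (vscale (1 - t) v))) (Fin (t * a + (1 - t) * c)).
Definition vconv d (u : nat -> vec d) (l : vec d) :=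
  forall eps, eps > 0 -> exists N, forall k, (N <= k)%nat -> vnorm (vsub (u k) l) < eps.
Definition closed_set d (S : vec d -> Prop) :=
  forall (u : nat -> vec d) l, (forall k, S (u k)) -> vconv u l -> S l.
Definition lsc_e d (h : vec d -> ereal) :=
  forall alpha, closed_set (fun u => ele (h u) (Fin alpha)).

Definition convex_r d (g : vec d -> R) :=
  forall u v t, 0 <= t <= 1 ->
    g (vadd (vscale t u) (vscale (1 - t) v)) <= t * g u + (1 - t) * g v.
Definition is_gradient d (g : vec d -> R) (G : vec d -> vec d) :=
  forall u eps, eps > 0 -> exists delta, delta > 0 /\
    forall v, vnorm (vsub v u) < delta ->
      Rabs (g v - g u - dot (G u) (vsub v u)) <= eps * vnorm (vsub v u).
Definition lipschitz_grad d (G : vec d -> vec d) (L : R) :=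
  forall u v, vnorm (vsub (G u) (G v)) <= L * vnorm (vsub u v).

Definition subgrad d (F : vec d -> ereal) (u w : vec d) :=
  exists a, F u = Fin a /\ forall v, ele (Fin (a + dot w (vsub v u))) (F v).

Definition fi d (g : vec d -> R) (h : vec d -> ereal) (u : vec d) : ereal :=
  eadd (Fin (g u)) (h u).
Definition ftot n (d : 'I_n -> nat) (g : forall i, vec (d i) -> R)
  (h : forall i, vec (d i) -> ereal) (x : bvec d) : ereal :=
  \big[eadd/Fin 0]_(i < n) fi (g i) (h i) (x i).

(* objective of the z_i-subproblem at iteration k *)
Definition zobj d m (Gy : vec d) (h : vec d -> ereal) (lam : vec m)
  (Ai : linmap m d) (beta : R) (resid : vec m) (coef : R) (zk : vec d)
  (u : vec d) : ereal :=
  eadd (h u) (Fin (dot Gy u + dot lam (lapp Ai u) + dot (vscale beta (ladj Ai resid)) u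
                   + coef / 2 * (vnorm (vsub u zk)) ^ 2)).

(* Main.v *)
Require Import Defs.
From Stdlib Require Import Reals Lra Psatz FunctionalExtensionality.
From HB Require Import structures.
From mathcomp Require Import all_boot.
Open Scope R_scope.
Set Implicit Arguments. Unset Strict Implicit.


HB.instance Definition _ := Monoid.isComLaw.Build R 0 Rplus
  (fun a b c => esym (Rplus_assoc a b c)) Rplus_comm Rplus_0_l.


Lemma sum_add (I : finType) (F H : I -> R) :
  \big[Rplus/0]_(j : I) F j + \big[Rplus/0]_(j : I) H j = \big[Rplus/0]_(j : I) (F j + H j).
Proof. by rewrite big_split. Qed.

Lemma sum_scal (I : finType) (c : R) (F : I -> R) :
  c * \big[Rplus/0]_(j : I) F j = \big[Rplus/0]_(j : I) (c * F j).
Proof.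
apply: (big_rec2 (fun y1 y2 => c * y1 = y2)); first by rewrite Rmult_0_r.
by move=> i y1 y2 _ <-; rewrite Rmult_plus_distr_l.
Qed.

Lemma sum_opp (I : finType) (F : I -> R) :
  - (\big[Rplus/0]_(j : I) F j) = \big[Rplus/0]_(j : I) (- F j).
Proof.
apply: (big_rec2 (fun y1 y2 => - y1 = y2)); first by rewrite Ropp_0.
by move=> i y1 y2 _ <-; rewrite Ropp_plus_distr.
Qed.

Lemma sum_sub (I : finType) (F H : I -> R) :
  \big[Rplus/0]_(j : I) F j - \big[Rplus/0]_(j : I) H j = \big[Rplus/0]_(j : I) (F j - H j).
Proof. by rewrite /Rminus sum_opp sum_add. Qed.

Lemma sum_ext (I : finType) (F H : I -> R) :
  (forall j, F j = H j) -> \big[Rplus/0]_(j : I) F j = \big[Rplus/0]_(j : I) H j.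
Proof. by move=> e; apply: eq_bigr => j _. Qed.

Lemma sum_le (I : finType) (F H : I -> R) :
  (forall j, F j <= H j) -> \big[Rplus/0]_(j : I) F j <= \big[Rplus/0]_(j : I) H j.
Proof.
move=> e; apply: (big_ind2 (fun y1 y2 => y1 <= y2)); [lra| |by move=> j _].
move=> *; lra.
Qed.

Lemma sum_ge0 (I : finType) (F : I -> R) :
  (forall j, 0 <= F j) -> 0 <= \big[Rplus/0]_(j : I) F j.
Proof.
move=> e; apply: (big_ind (fun y => 0 <= y)); [lra| |by move=> j _].
move=> *; lra.
Qed.

Lemma sum0 (I : finType) : \big[Rplus/0]_(j : I) 0 = 0.
Proof. by rewrite big1. Qed.

Lemma sum_exch (I J : finType) (F : I -> J -> R) :
  \big[Rplus/0]_(i : I) \big[Rplus/0]_(j : J) F i j =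
  \big[Rplus/0]_(j : J) \big[Rplus/0]_(i : I) F i j.
Proof. exact: exchange_big. Qed.

Lemma sum_ord0 (F : 'I_0 -> R) : \big[Rplus/0]_(j < 0) F j = 0.
Proof. by rewrite big_ord0. Qed.

Lemma sum_term_le (I : finType) (F : I -> R) (i0 : I) :
  (forall j, 0 <= F j) -> F i0 <= \big[Rplus/0]_(j : I) F j.
Proof.
move=> e; rewrite (bigD1 i0) //=.
have : 0 <= \big[Rplus/0]_(j | j != i0) F j.
  apply: (big_ind (fun y => 0 <= y)); [lra| |by move=> j _].
  move=> *; lra.
lra.
Qed.

Lemma bigmin_le_init (I : finType) (x0 : R) (F : I -> R) :
  \big[Rmin/x0]_(i : I) F i <= x0.
Proof.
rewrite unlock /reducebig.
elim: (index_enum I) => [|a s IH] /=; first lra.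
by apply: Rle_trans (Rmin_r _ _) IH.
Qed.

Lemma bigmin_le (I : finType) (x0 : R) (F : I -> R) (i0 : I) :
  \big[Rmin/x0]_(i : I) F i <= F i0.
Proof.
rewrite unlock /reducebig.
have : i0 \in index_enum I by rewrite mem_index_enum.
elim: (index_enum I) => [//|a s IH] /=.
rewrite in_cons => /orP [/eqP <-|Hs].
  by apply: Rmin_l.
by rewrite /=; apply: Rle_trans (Rmin_r _ _) (IH Hs).
Qed.

Lemma bigmax_ge (I : finType) (x0 : R) (F : I -> R) (i0 : I) :
  F i0 <= \big[Rmax/x0]_(i : I) F i.
Proof.
rewrite unlock /reducebig.
have : i0 \in index_enum I by rewrite mem_index_enum.
elim: (index_enum I) => [//|a s IH] /=.
rewrite in_cons => /orP [/eqP <-|Hs].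
  by apply: Rmax_l.
by apply: Rle_trans (IH Hs) (Rmax_r _ _).
Qed.

Lemma bigmax_ge_init (I : finType) (x0 : R) (F : I -> R) :
  x0 <= \big[Rmax/x0]_(i : I) F i.
Proof.
rewrite unlock /reducebig.
elim: (index_enum I) => [|a s IH] /=; first lra.
by apply: Rle_trans IH (Rmax_r _ _).
Qed.


Lemma sum_scalr (I : finType) (c : R) (F : I -> R) :
  (\big[Rplus/0]_(j : I) F j) * c = \big[Rplus/0]_(j : I) (F j * c).
Proof. rewrite Rmult_comm sum_scal; apply: sum_ext => j; ring. Qed.

Ltac sumify := repeat rewrite ?sum_scal ?sum_scalr ?sum_add ?sum_sub ?sum_opp.

Lemma dot_ge0 d (u : vec d) : 0 <= dot u u.
Proof. apply: sum_ge0 => j; nra. Qed.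

Lemma vnorm_ge0 d (u : vec d) : 0 <= vnorm u.
Proof. exact: sqrt_pos. Qed.

Lemma vnorm_sq d (u : vec d) : vnorm u ^ 2 = dot u u.
Proof. by rewrite /vnorm pow2_sqrt //; apply: dot_ge0. Qed.

Lemma dot_comm d (u v : vec d) : dot u v = dot v u.
Proof. by apply: sum_ext => j; ring. Qed.

Lemma quad_disc (a b c : R) : 0 <= c ->
  (forall t, 0 <= a - 2 * t * b + t ^ 2 * c) -> b ^ 2 <= a * c.
Proof.
move=> Hc0 H.
have Ha : 0 <= a by have := H 0; lra.
have [Hc|Hc] : c = 0 \/ 0 < c by lra.
- subst c.
  destruct (Req_dec b 0) as [->|Hb]; first nra.
  have := H ((a + 1) / (2 * b)).
  have -> : a - 2 * ((a + 1) / (2 * b)) * b + ((a + 1) / (2 * b)) ^ 2 * 0 = -1.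
    field; lra.
  lra.
- have := H (b / c).
  have -> : a - 2 * (b / c) * b + (b / c) ^ 2 * c = (a * c - b ^ 2) / c by field; lra.
  move=> Hq.
  have : 0 <= (a * c - b ^ 2) / c * c by nra.
  rewrite /Rdiv Rmult_assoc Rinv_l; lra.
Qed.

Lemma cs_sq d (u v : vec d) : dot u v ^ 2 <= dot u u * dot v v.
Proof.
apply: quad_disc; first exact: dot_ge0. move=> t.
have -> : dot u u - 2 * t * dot u v + t ^ 2 * dot v v =
          dot (vsub u (vscale t v)) (vsub u (vscale t v)).
  rewrite /dot /vsub /vscale; sumify; apply: sum_ext => j; ring.
exact: dot_ge0.
Qed.

Lemma cs d (u v : vec d) : dot u v <= vnorm u * vnorm v.
Proof.
rewrite /vnorm -sqrt_mult; [|exact: dot_ge0|exact: dot_ge0].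
apply: Rle_trans (Rle_abs _) _.
rewrite -sqrt_Rsqr_abs; apply: sqrt_le_1_alt.
have E := Rsqr_abs (dot u v). rewrite /Rsqr in E *. have := cs_sq u v. simpl. lra.
Qed.

Lemma dot_scale d (c : R) (u : vec d) :
  dot (vscale c u) (vscale c u) = c ^ 2 * dot u u.
Proof. rewrite /dot /vscale; sumify; apply: sum_ext => j; ring. Qed.

Lemma vnorm_scale d (c : R) (u : vec d) : vnorm (vscale c u) = Rabs c * vnorm u.
Proof.
rewrite /vnorm dot_scale sqrt_mult_alt; last by have := pow2_ge_0 c; lra.
by rewrite -sqrt_Rsqr_abs /Rsqr /= Rmult_1_r.
Qed.

Lemma adjoint m p (A : linmap m p) (w : vec m) (u : vec p) :
  dot w (lapp A u) = dot (ladj A w) u.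
Proof.
rewrite /dot /lapp /ladj.
under eq_bigr => r _ do rewrite sum_scal.
under [RHS]eq_bigr => j _ do rewrite sum_scalr.
rewrite sum_exch; apply: sum_ext => j; apply: sum_ext => r; ring.
Qed.

Lemma lapp_scale m p (A : linmap m p) c (u : vec p) :
  lapp A (vscale c u) = vscale c (lapp A u).
Proof.
apply: functional_extensionality => r; rewrite /lapp /vscale sum_scal.
apply: sum_ext => j; ring.
Qed.

Lemma opnorm_ge0 m p (A : linmap m p) nA : is_opnorm A nA -> 0 <= nA.
Proof.
move=> [Hub _]. have H0 := vnorm_ge0 (lapp A (@vzero p)). apply: (Rle_trans _ _ _ H0).
apply: Hub; exists (@vzero p); split => //.
rewrite /vnorm /dot /vzero. rewrite (@sum_ext _ _ (fun _ => 0)); last by move=> j; ring.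
rewrite sum0 sqrt_0; lra.
Qed.

Lemma opnorm_bound m p (A : linmap m p) nA (u : vec p) :
  is_opnorm A nA -> vnorm (lapp A u) <= nA * vnorm u.
Proof.
move=> HA; have H0 := opnorm_ge0 HA; case: HA => Hub _.
have Hs := vnorm_ge0 u; have Hq := vnorm_ge0 (lapp A u).
have key : forall t, 0 <= t -> t * vnorm u <= 1 -> t * vnorm (lapp A u) <= nA.
  move=> t Ht Htu; apply: Hub; exists (vscale t u); split.
    by rewrite vnorm_scale Rabs_right; lra.
  by rewrite lapp_scale vnorm_scale Rabs_right; lra.
destruct (Req_dec (vnorm u) 0) as [E|E].
- rewrite E Rmult_0_r.
  destruct (Req_dec (vnorm (lapp A u)) 0) as [E2|E2]; first lra.
  have Hp : 0 < vnorm (lapp A u) by lra.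
  have := key ((nA + 1) / vnorm (lapp A u)).
  rewrite E Rmult_0_r.
  have Hpos : 0 <= (nA + 1) / vnorm (lapp A u).
    apply: Rmult_le_pos; [lra| apply: Rlt_le; apply: Rinv_0_lt_compat; lra].
  move=> /(_ Hpos ltac:(lra)).
  have -> : (nA + 1) / vnorm (lapp A u) * vnorm (lapp A u) = nA + 1 by field; lra.
  lra.
- have Hp : 0 < vnorm u by lra.
  have := key (/ vnorm u).
  have Hpos : 0 <= / vnorm u by apply: Rlt_le; apply: Rinv_0_lt_compat.
  rewrite Rinv_l //. move=> /(_ Hpos ltac:(lra)) Hk.
  have := Rmult_le_compat_l (vnorm u) _ _ Hs Hk.
  have -> : vnorm u * (/ vnorm u * vnorm (lapp A u)) = vnorm (lapp A u) by field; lra.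
  lra.
Qed.

Lemma sum_ones n : \big[Rplus/0]_(i < n) 1 = INR n.
Proof.
elim: n => [|n IH]; first by rewrite big_ord0.
rewrite big_ord_recr IH S_INR //.
Qed.

Lemma sq_sum_le n (a : 'I_n -> R) :
  (\big[Rplus/0]_(i < n) a i) ^ 2 <= INR n * \big[Rplus/0]_(i < n) (a i ^ 2).
Proof.
have := cs_sq (a : vec n) (fun _ => 1).
rewrite /dot.
have -> : \big[Rplus/0]_(j < n) (a j * 1) = \big[Rplus/0]_(i < n) a i
  by apply: sum_ext => j; ring.
have -> : \big[Rplus/0]_(j < n) (1 * 1) = INR n
  by rewrite -sum_ones; apply: sum_ext => j; ring.
have -> : \big[Rplus/0]_(j < n) (a j * a j) = \big[Rplus/0]_(i < n) (a i ^ 2)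
  by apply: sum_ext => j; ring.
lra.
Qed.


Lemma theta_step (t s : R) : 0 < t <= 1 ->
  s = (- t ^ 2 + sqrt (t ^ 4 + 4 * t ^ 2)) / 2 ->
  0 < s /\ s <= 1 /\ s ^ 2 = t ^ 2 * (1 - s) /\ s <= t /\ s * (2 + t) <= 2 * t.
Proof.
move=> Ht Hs.
have Hq : 0 <= t ^ 4 + 4 * t ^ 2 by nra.
set q := sqrt (t ^ 4 + 4 * t ^ 2) in Hs.
have Hq2 : q * q = t ^ 4 + 4 * t ^ 2 by rewrite /q sqrt_sqrt.
have Hq0 : 0 <= q by apply: sqrt_pos.
have Hqt : t ^ 2 < q.
  apply: Rnot_le_lt => Hc.
  have : q * q <= t ^ 2 * t ^ 2 by apply: Rmult_le_compat.
  nra.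
have Hs0 : 0 < s by rewrite Hs; lra.
have Heq : s ^ 2 = t ^ 2 * (1 - s) by rewrite Hs; nra.
have Hs1 : s <= 1 by nra.
have Hst : s <= t by nra.
split; first done. split; first done. split; first done. split; first done.
apply: Rnot_lt_le => Hc.
have Hc' : 2 * t < s * (2 + t) by lra.
have Ha : 0 < 2 + t by lra.
(* f(s) = s^2 + t^2 s - t^2 = 0 ; f increasing; f(2t/(2+t)) >= 0 *)
set u := 2 * t / (2 + t).
have Hu : u * (2 + t) = 2 * t by rewrite /u; field; lra.
have Hus : u < s by nra.
have Hu0 : 0 < u by rewrite /u; apply: Rdiv_lt_0_compat; lra.
have Hfu : 0 <= u ^ 2 + t ^ 2 * u - t ^ 2.
  have -> : u ^ 2 + t ^ 2 * u - t ^ 2 = t ^ 4 / (2 + t) ^ 2.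
    rewrite /u; field; lra.
  apply: Rmult_le_pos; [nra| apply: Rlt_le; apply: Rinv_0_lt_compat; nra].
nra.
Qed.

Lemma theta_props (theta : nat -> R) :
  theta 0%nat = 1 ->
  (forall k, theta (S k) = (- (theta k) ^ 2 + sqrt ((theta k) ^ 4 + 4 * (theta k) ^ 2)) / 2) ->
  forall k, 0 < theta k <= 1 /\ theta k <= 2 / (INR k + 2).
Proof.
move=> H0 HS; elim=> [|k [IH1 IH2]].
  rewrite H0 /=; split; [lra|]. rewrite /Rdiv; lra.
have := theta_step IH1 (HS k); move=> [A1 [A2 [A3 [A4 A5]]]].
split; first lra.
rewrite S_INR.
have Hk : 0 <= INR k by apply: pos_INR.
apply: (Rmult_le_reg_r (INR k + 1 + 2)); first lra.
rewrite /Rdiv Rmult_assoc Rinv_l; last lra.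
have : theta k * (INR k + 2) <= 2.
  have := Rmult_le_compat_r (INR k + 2) _ _ ltac:(lra) IH2.
  rewrite /Rdiv Rmult_assoc Rinv_l; lra.
nra.
Qed.

Lemma theta_rel (theta : nat -> R) :
  theta 0%nat = 1 ->
  (forall k, theta (S k) = (- (theta k) ^ 2 + sqrt ((theta k) ^ 4 + 4 * (theta k) ^ 2)) / 2) ->
  forall k, (1 - theta (S k)) / theta (S k) ^ 2 = 1 / theta k ^ 2 /\ theta (S k) <= theta k.
Proof.
move=> H0 HS k.
have [P1 _] := theta_props H0 HS k.
have := theta_step P1 (HS k); move=> [A1 [A2 [A3 [A4 A5]]]].
split; last done.
field_simplify_eq; try (split; lra); try lra.
Qed.



Lemma dot_scale_r d (a w : vec d) t : dot a (vscale t w) = t * dot a w.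
Proof. rewrite /dot /vscale; sumify; apply: sum_ext => j; ring. Qed.

Lemma dot_sub_l d (a b w : vec d) : dot (vsub a b) w = dot a w - dot b w.
Proof. rewrite /dot /vsub; sumify; apply: sum_ext => j; ring. Qed.

Lemma grad_lower d (g : vec d -> R) G :
  convex_r g -> is_gradient g G -> forall y u, g y + dot (G y) (vsub u y) <= g u.
Proof.
move=> Hc Hg y u.
apply: Rnot_lt_le => Hlt.
set gap := g y + dot (G y) (vsub u y) - g u.
have Hgap : 0 < gap by rewrite /gap; lra.
set N := vnorm (vsub u y).
have HN : 0 <= N by apply: vnorm_ge0.
have Heps : gap / (2 * (N + 1)) > 0.
  apply: Rdiv_lt_0_compat; lra.
have [delta [Hd Hdel]] := Hg y _ Heps.
set t := Rmin 1 (delta / (2 * (N + 1))).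
have Ht0 : 0 < t.
  apply: Rmin_pos; first lra. apply: Rdiv_lt_0_compat; lra.
have Ht1 : t <= 1 by apply: Rmin_l.
have Ht2 : t <= delta / (2 * (N + 1)) by apply: Rmin_r.
set v := vadd (vscale t u) (vscale (1 - t) y).
have Hv : vsub v y = vscale t (vsub u y).
  apply: functional_extensionality => j; rewrite /v /vsub /vadd /vscale; ring.
have Hnv : vnorm (vsub v y) = t * N by rewrite Hv vnorm_scale Rabs_right //; lra.
have HtN : t * N < delta.
  have : t * (2 * (N + 1)) <= delta.
    have := Rmult_le_compat_r (2 * (N + 1)) _ _ ltac:(lra) Ht2.
    rewrite /Rdiv Rmult_assoc Rinv_l; lra.
  nra.
have := Hdel v; rewrite Hnv => /(_ HtN).
rewrite Hv dot_scale_r => Habs.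
have Hconv := Hc u y t (conj (Rlt_le _ _ Ht0) Ht1).
rewrite -/v in Hconv.
set D := dot (G y) (vsub u y).
set e := gap / (2 * (N + 1)).
have He : e * (2 * (N + 1)) = gap by rewrite /e; field; lra.
have H1 := Rle_abs (- (g v - g y - t * D)).
rewrite Rabs_Ropp in H1.
have Hgd : gap = g y + D - g u by [].
have E1 : t * gap = t * g y + t * D - t * g u by rewrite Hgd; ring.
have E2 : (1 - t) * g y = g y - t * g y by ring.
rewrite -/D -/e in Habs. have : t * gap <= e * (t * N) by lra.
have : e * N < gap by nra.
nra.
Qed.

Lemma phi_deriv d (g : vec d -> R) G (y w : vec d) :
  is_gradient g G -> forall t,
  derivable_pt_lim (fun s => g (vadd y (vscale s w))) t (dot (G (vadd y (vscale t w))) w).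
Proof.
move=> Hg t eps Heps.
set N := vnorm w.
have HN : 0 <= N by apply: vnorm_ge0.
set u := vadd y (vscale t w).
have He : eps / (2 * (N + 1)) > 0 by apply: Rdiv_lt_0_compat; lra.
have [delta0 [Hd0 Hdel]] := Hg u _ He.
have Hpos : 0 < delta0 / (N + 1) by apply: Rdiv_lt_0_compat; lra.
exists (mkposreal _ Hpos) => hh Hh0 Hhd /=.
simpl in Hhd.
have Hv : vsub (vadd y (vscale (t + hh) w)) u = vscale hh w.
  apply: functional_extensionality => j; rewrite /u /vsub /vadd /vscale; ring.
have Hnv : vnorm (vsub (vadd y (vscale (t + hh) w)) u) = Rabs hh * N
  by rewrite Hv vnorm_scale.
have Hah := Rabs_pos hh.
have Hlt : Rabs hh * N < delta0.
  have : Rabs hh * (N + 1) < delta0.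
    have := Rmult_lt_compat_r (N + 1) _ _ ltac:(lra) Hhd.
    rewrite /Rdiv Rmult_assoc Rinv_l; lra.
  nra.
have := Hdel _ (eq_ind_r (fun z => z < delta0) Hlt Hnv).
rewrite Hnv Hv dot_scale_r => Hb.
set D := dot (G u) w in Hb *.
set e := eps / (2 * (N + 1)) in Hb.
have Hee : e * (2 * (N + 1)) = eps by rewrite /e; field; lra.
have -> : (g (vadd y (vscale (t + hh) w)) - g u) / hh - D =
          (g (vadd y (vscale (t + hh) w)) - g u - hh * D) / hh by field.
rewrite /Rdiv Rabs_mult Rabs_inv.
have Hah' : 0 < Rabs hh by apply: Rabs_pos_lt.
apply: (Rmult_lt_reg_r (Rabs hh)) => //.
rewrite /Rdiv Rmult_assoc Rinv_l; last lra.
rewrite Rmult_1_r.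
apply: Rle_lt_trans Hb _.
have : e * N < eps by nra.
nra.
Qed.

Lemma descent d (g : vec d -> R) G (Lc : R) :
  is_gradient g G -> lipschitz_grad G Lc -> forall y x,
  g x <= g y + dot (G y) (vsub x y) + Lc / 2 * dot (vsub x y) (vsub x y).
Proof.
move=> Hg Hl y x.
set w := vsub x y.
set c1 := dot (G y) w.
set c2 := Lc / 2 * dot w w.
set phi := fun s => g (vadd y (vscale s w)).
set psi := (phi - (mult_real_fct c1 id + mult_real_fct c2 (fun s => s ^ 2)))%F.
have Hd : forall c, 0 <= c <= 1 -> derivable_pt_lim psi c
   (dot (G (vadd y (vscale c w))) w - (c1 * 1 + c2 * (INR 2 * c ^ Init.Nat.pred 2))).
  move=> c _; apply: derivable_pt_lim_minus; first exact: phi_deriv.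
  apply: derivable_pt_lim_plus; apply: derivable_pt_lim_scal.
    exact: derivable_pt_lim_id.
  exact: derivable_pt_lim_pow.
have [c [Hc1 Hc2]] := MVT_cor2 _ _ 0 1 Rlt_0_1 Hd.
have E1 : vadd y (vscale 1 w) = x.
  apply: functional_extensionality => j; rewrite /w /vadd /vscale /vsub; ring.
have E0 : vadd y (vscale 0 w) = y.
  apply: functional_extensionality => j; rewrite /w /vadd /vscale /vsub; ring.
move: Hc1; rewrite /psi /minus_fct /plus_fct /mult_real_fct /id /phi E1 E0 /=.
have Hder : dot (G (vadd y (vscale c w))) w - c1 - Lc * c * dot w w <= 0.
  rewrite /c1 -dot_sub_l.
  have Hsub : vsub (vadd y (vscale c w)) y = vscale c w.
    apply: functional_extensionality => j; rewrite /vadd /vscale /vsub; ring.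
  have H1 := cs (vsub (G (vadd y (vscale c w))) (G y)) w.
  have H2 := Hl (vadd y (vscale c w)) y.
  rewrite Hsub vnorm_scale Rabs_right in H2; last lra.
  have Hn := vnorm_ge0 w.
  have Hn2 := vnorm_sq w.
  have Hg0 := vnorm_ge0 (vsub (G (vadd y (vscale c w))) (G y)).
  have : vnorm (vsub (G (vadd y (vscale c w))) (G y)) * vnorm w <= Lc * (c * vnorm w) * vnorm w
    by apply: Rmult_le_compat_r.
  rewrite -Hn2 /=. nra.
rewrite /c2 => Hm. nra.
Qed.



Lemma small_t (X K : R) : 0 <= K ->
  (forall t, 0 < t <= 1 -> 0 <= t * X + t ^ 2 * K) -> 0 <= X.
Proof.
move=> HK H; apply: Rnot_lt_le => HX.
set t := Rmin 1 (- X / (2 * (K + 1))).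
have Ht0 : 0 < t.
  apply: Rmin_pos; first lra. apply: Rdiv_lt_0_compat; lra.
have Ht1 : t <= 1 by apply: Rmin_l.
have Ht2 : t <= - X / (2 * (K + 1)) by apply: Rmin_r.
have Ht3 : t * (2 * (K + 1)) <= - X.
  have := Rmult_le_compat_r (2 * (K + 1)) _ _ ltac:(lra) Ht2.
  rewrite /Rdiv Rmult_assoc Rinv_l; lra.
have := H t (conj Ht0 Ht1).
have : t * K < - X / 2 by nra.
nra.
Qed.

Definition linz d m (Gy : vec d) (lam : vec m) (Ai : linmap m d) (beta : R)
  (resid : vec m) (u : vec d) : R :=
  dot Gy u + dot lam (lapp Ai u) + dot (vscale beta (ladj Ai resid)) u.

Lemma linz_comb d m (Gy : vec d) (lam : vec m) Ai beta resid (u z : vec d) t :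
  linz Gy lam Ai beta resid (vadd (vscale t u) (vscale (1 - t) z)) =
  t * linz Gy lam Ai beta resid u + (1 - t) * linz Gy lam Ai beta resid z.
Proof.
rewrite /linz !adjoint /dot /vadd /vscale; sumify; apply: sum_ext => j; ring.
Qed.

Lemma zobj_eq d m (Gy : vec d) h (lam : vec m) Ai beta resid coef zk u :
  zobj Gy h lam Ai beta resid coef zk u =
  eadd (h u) (Fin (linz Gy lam Ai beta resid u + coef / 2 * dot (vsub u zk) (vsub u zk))).
Proof. by rewrite /zobj vnorm_sq. Qed.

Lemma zobj_fin d m (Gy : vec d) h (lam : vec m) Ai beta resid coef zk z1 :
  proper_e h ->
  (forall u, ele (zobj Gy h lam Ai beta resid coef zk z1) (zobj Gy h lam Ai beta resid coef zk u)) ->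
  exists hz, h z1 = Fin hz.
Proof.
move=> [u0 Hu0] Hmin; have := Hmin u0; rewrite /zobj.
case: (h u0) Hu0 => [a|] // _; case: (h z1) => [hz|] //= _; by exists hz.
Qed.

Lemma three_point d m (Gy : vec d) h (lam : vec m) Ai beta resid coef zk z1 :
  convex_e h -> 0 <= coef ->
  (forall u, ele (zobj Gy h lam Ai beta resid coef zk z1) (zobj Gy h lam Ai beta resid coef zk u)) ->
  forall u hz hu, h z1 = Fin hz -> h u = Fin hu ->
  hz + linz Gy lam Ai beta resid z1 + coef / 2 * dot (vsub z1 zk) (vsub z1 zk)
     + coef / 2 * dot (vsub u z1) (vsub u z1)
  <= hu + linz Gy lam Ai beta resid u + coef / 2 * dot (vsub u zk) (vsub u zk).
Proof.
move=> Hc Hcoef Hmin u hz hu Hz Hu.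
set lin := linz Gy lam Ai beta resid.
set N1 := dot (vsub z1 zk) (vsub z1 zk).
set N3 := dot (vsub u z1) (vsub u z1).
set M := dot (vsub z1 zk) (vsub u z1).
have E2 : dot (vsub u zk) (vsub u zk) = N1 + 2 * M + N3.
  rewrite /N1 /N3 /M /dot /vsub; sumify; apply: sum_ext => j; ring.
rewrite E2.
have HN3 : 0 <= N3 by apply: dot_ge0.
suff : 0 <= hu - hz + lin u - lin z1 + coef * M by lra.
apply: (small_t (K := coef / 2 * N3)); first nra.
move=> t Ht.
set w := vadd (vscale t u) (vscale (1 - t) z1).
have Hcw := Hc u z1 t hu hz ltac:(lra) Hu Hz.
rewrite -/w in Hcw.
have := Hmin w; rewrite !zobj_eq Hz.
have Ew : dot (vsub w zk) (vsub w zk) = N1 + 2 * t * M + t ^ 2 * N3.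
  rewrite /w /N1 /N3 /M /dot /vsub /vadd /vscale; sumify; apply: sum_ext => j; ring.
rewrite Ew /w linz_comb -/w -/lin.
case: (h w) Hcw => [hw|] //= Hhw Hle.
rewrite -/N1 in Hle. nra.
Qed.



Definition sqn d (u : vec d) := dot u u.

Lemma block_step d m (g : vec d -> R) (G : vec d -> vec d) (h : vec d -> ereal)
  (Lc : R) (Ai : linmap m d) (beta eta th : R) (lam resid : vec m)
  (xk zk z1 y x1 xs : vec d) (hs : R) :
  convex_r g -> is_gradient g G -> lipschitz_grad G Lc ->
  proper_e h -> convex_e h ->
  0 < th <= 1 -> 0 <= Lc -> 0 <= beta * eta ->
  (th < 1 -> exists a, h xk = Fin a) ->
  h xs = Fin hs ->
  y = vadd (vscale (1 - th) xk) (vscale th zk) ->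
  x1 = vadd (vscale (1 - th) xk) (vscale th z1) ->
  (forall u, ele (zobj (G y) h lam Ai beta resid (Lc * th + beta * eta) zk z1)
                 (zobj (G y) h lam Ai beta resid (Lc * th + beta * eta) zk u)) ->
  (exists a, h x1 = Fin a) /\
  g x1 + real_of (h x1) <=
    (1 - th) * (g xk + real_of (h xk)) + th * (g xs + hs)
    - th * (linz (G y) lam Ai beta resid z1 - linz (G y) lam Ai beta resid xs
            - dot (G y) (vsub z1 xs))
    + th * (Lc * th + beta * eta) / 2 * (sqn (vsub xs zk) - sqn (vsub xs z1))
    - th * (beta * eta) / 2 * sqn (vsub z1 zk).
Proof.
move=> Hgc Hgg Hgl Hhp Hhc Hth HL Hbe Hxk Hs Hy Hx1 Hmin.
have [hz Hz] := zobj_fin Hhp Hmin.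
set c := Lc * th + beta * eta.
have Hc0 : 0 <= c by rewrite /c; nra.
have H3 := three_point Hhc Hc0 Hmin Hz Hs.
set lin := linz (G y) lam Ai beta resid.
rewrite -/lin in H3.
set W := sqn (vsub z1 zk).
set Dk := sqn (vsub xs zk).
set D1 := sqn (vsub xs z1).
rewrite -/W -/Dk -/D1 in H3 *.
have Hd := descent Hgg Hgl y x1.
have Ex1y : vsub x1 y = vscale th (vsub z1 zk).
  apply: functional_extensionality => j; rewrite Hx1 Hy /vsub /vadd /vscale; ring.
rewrite Ex1y dot_scale in Hd.
have Edot : dot (G y) (vscale th (vsub z1 zk)) =
    (1 - th) * dot (G y) (vsub xk y) + th * dot (G y) (vsub z1 y).
  rewrite Hy /dot /vsub /vadd /vscale; sumify; apply: sum_ext => j; ring.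
rewrite Edot in Hd.
have Hlk := grad_lower Hgc Hgg y xk.
have Hls := grad_lower Hgc Hgg y xs.
have Ezs : dot (G y) (vsub z1 y) = dot (G y) (vsub z1 xs) + dot (G y) (vsub xs y).
  rewrite /dot /vsub; sumify; apply: sum_ext => j; ring.
rewrite Ezs in Hd.
have [[a Ha] Hh] : (exists a, h x1 = Fin a) /\
   real_of (h x1) <= (1 - th) * real_of (h xk) + th * hz.
  destruct (Req_dec th 1) as [E|E].
  - have -> : x1 = z1.
      apply: functional_extensionality => j; rewrite Hx1 E /vadd /vscale; ring.
    rewrite Hz /=; split; first by exists hz.
    rewrite E; lra.
  - have [hk Hk] := Hxk ltac:(lra).
    have Hcv := Hhc xk z1 (1 - th) hk hz ltac:(lra) Hk Hz.
    have Ex : vadd (vscale (1 - th) xk) (vscale (1 - (1 - th)) z1) = x1.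
      apply: functional_extensionality => j; rewrite Hx1 /vadd /vscale; ring.
    rewrite Ex in Hcv.
    rewrite Hk; case: (h x1) Hcv => [a|] //= Hcv.
    split; [by exists a | lra].
split; first by exists a.
have HW : 0 <= W by apply: dot_ge0.
change (dot (vsub z1 zk) (vsub z1 zk)) with W in H3. change (dot (vsub z1 zk) (vsub z1 zk)) with W in Hd.
change (dot (vsub xs z1) (vsub xs z1)) with D1 in H3.
change (dot (vsub xs zk) (vsub xs zk)) with Dk in H3.
rewrite -/c in H3.
have T1 := Rmult_le_compat_l th _ _ ltac:(lra) H3.
have T2 := Rmult_le_compat_l (1 - th) _ _ ltac:(lra) Hlk.
have T3 := Rmult_le_compat_l th _ _ ltac:(lra) Hls.
have Ec : th * c = Lc * th ^ 2 + th * (beta * eta) by rewrite /c; ring.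
nra.
Qed.



Lemma Aop_pt n (d : 'I_n -> nat) m (A : forall i : 'I_n, linmap m (d i)) (x : bvec d) r :
  Aop A x r = \big[Rplus/0]_(i < n) lapp (A i) (x i) r.
Proof.
rewrite /Aop.
by apply: (big_morph (fun v : vec m => v r) (id1 := 0) (op1 := Rplus)).
Qed.

Lemma lapp_sub m p (A : linmap m p) (u v : vec p) :
  lapp A (vsub u v) = vsub (lapp A u) (lapp A v).
Proof.
apply: functional_extensionality => r; rewrite /lapp /vsub; sumify.
apply: sum_ext => j; ring.
Qed.

Lemma lapp_comb m p (A : linmap m p) (u v : vec p) a c :
  lapp A (vadd (vscale a u) (vscale c v)) = vadd (vscale a (lapp A u)) (vscale c (lapp A v)).
Proof.
apply: functional_extensionality => r; rewrite /lapp /vadd /vscale; sumify.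
apply: sum_ext => j; ring.
Qed.

Lemma Aop_sub n (d : 'I_n -> nat) m (A : forall i : 'I_n, linmap m (d i)) (u v : bvec d) :
  Aop A (bsub u v) = vsub (Aop A u) (Aop A v).
Proof.
apply: functional_extensionality => r; rewrite /vsub !Aop_pt /bsub; sumify.
apply: sum_ext => i; by rewrite lapp_sub.
Qed.

Lemma Aop_comb n (d : 'I_n -> nat) m (A : forall i : 'I_n, linmap m (d i)) (u v w : bvec d) a c :
  (forall i, w i = vadd (vscale a (u i)) (vscale c (v i))) ->
  Aop A w = vadd (vscale a (Aop A u)) (vscale c (Aop A v)).
Proof.
move=> Hw; apply: functional_extensionality => r; rewrite /vadd /vscale !Aop_pt; sumify.
apply: sum_ext => i; rewrite Hw lapp_comb /vadd /vscale; ring.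
Qed.

Lemma dot_Aop n (d : 'I_n -> nat) m (A : forall i : 'I_n, linmap m (d i)) (l : vec m) (w : bvec d) :
  dot l (Aop A w) = \big[Rplus/0]_(i < n) dot l (lapp (A i) (w i)).
Proof.
rewrite /dot.
under eq_bigr => r _ do rewrite Aop_pt sum_scal.
rewrite sum_exch; apply: sum_ext => i; done.
Qed.

Lemma sqn_Aop n (d : 'I_n -> nat) m (A : forall i : 'I_n, linmap m (d i)) (w : bvec d) :
  sqn (Aop A w) <= INR n * \big[Rplus/0]_(i < n) sqn (lapp (A i) (w i)).
Proof.
rewrite /sqn /dot.
apply: (Rle_trans _ (\big[Rplus/0]_(r < m)
        (INR n * \big[Rplus/0]_(i < n) (lapp (A i) (w i) r ^ 2)))).
  apply: sum_le => r; rewrite Aop_pt.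
  have := sq_sum_le (fun i => lapp (A i) (w i) r). simpl. lra.
rewrite -sum_scal; apply: Rmult_le_compat_l; first exact: pos_INR.
rewrite sum_exch; apply: Req_le; apply: sum_ext => i; apply: sum_ext => r; simpl; ring.
Qed.

Lemma lin_identity d m (Gy : vec d) (lam : vec m) (Ai : linmap m d) beta resid (z1 xs : vec d) :
  linz Gy lam Ai beta resid z1 - linz Gy lam Ai beta resid xs - dot Gy (vsub z1 xs)
  = dot (vadd lam (vscale beta resid)) (lapp Ai (vsub z1 xs)).
Proof.
rewrite /linz !adjoint.
have -> : ladj Ai (vadd lam (vscale beta resid)) = vadd (ladj Ai lam) (vscale beta (ladj Ai resid)).
  apply: functional_extensionality => j; rewrite /ladj /vadd /vscale; sumify.
  apply: sum_ext => r; ring.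
rewrite /dot /vadd /vsub /vscale; sumify; apply: sum_ext => j; ring.
Qed.

Lemma ftot_fin n (d : 'I_n -> nat) (g : forall i, vec (d i) -> R)
  (h : forall i, vec (d i) -> ereal) (v : bvec d) :
  (forall i, exists a, h i (v i) = Fin a) ->
  ftot g h v = Fin (\big[Rplus/0]_(i < n) (g i (v i) + real_of (h i (v i)))).
Proof.
move=> Hf; rewrite /ftot.
rewrite (eq_bigr (fun i => Fin (g i (v i) + real_of (h i (v i))))); last first.
  move=> i _; have [a Ha] := Hf i; by rewrite /fi Ha.
symmetry; by apply: (big_morph Fin (id1 := Fin 0) (op1 := eadd)).
Qed.

Unset Implicit Arguments. Set Strict Implicit.


Theorem theorem2
  (n : nat) (d : 'I_n -> nat) (m : nat)
  (g : forall i : 'I_n, vec (d i) -> R)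
  (G : forall i : 'I_n, vec (d i) -> vec (d i))
  (h : forall i : 'I_n, vec (d i) -> ereal)
  (L : 'I_n -> R)
  (A : forall i : 'I_n, linmap m (d i)) (nA : 'I_n -> R) (b : vec m)
  (beta : R) (eta : 'I_n -> R)
  (Hg_conv : forall i, convex_r (g i))
  (Hg_grad : forall i, is_gradient (g i) (G i))
  (HL : forall i, 0 < L i)
  (Hg_lip : forall i, lipschitz_grad (G i) (L i))
  (Hh : forall i, proper_e (h i) /\ convex_e (h i) /\ lsc_e (h i))
  (HA_nz : forall i, exists r j, A i r j <> 0)
  (HnA : forall i, is_opnorm (A i) (nA i))
  (Hbeta : 0 < beta)
  (Heta : forall i, INR n * (nA i) ^ 2 < eta i)
  (x z y : nat -> bvec d) (lam : nat -> vec m) (theta : nat -> R)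
  (Htheta0 : theta 0%nat = 1)
  (Htheta : forall k, theta (S k) =
      (- (theta k) ^ 2 + sqrt ((theta k) ^ 4 + 4 * (theta k) ^ 2)) / 2)
  (Hy : forall k i, y (S k) i =
      vadd (vscale (1 - theta k) (x k i)) (vscale (theta k) (z k i)))
  (Hz : forall k i u,
      ele (zobj (G i (y (S k) i)) (h i) (lam k) (A i) beta
             (vsub (Aop A (z k)) b) (L i * theta k + beta * eta i) (z k i)
             (z (S k) i))
          (zobj (G i (y (S k) i)) (h i) (lam k) (A i) beta
             (vsub (Aop A (z k)) b) (L i * theta k + beta * eta i) (z k i) u))
  (Hx : forall k i, x (S k) i =
      vadd (vscale (1 - theta k) (x k i)) (vscale (theta k) (z (S k) i)))
  (Hlam : forall k, lam (S k) = vadd (lam k) (vscale beta (vsub (Aop A (z (S k))) b)))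
  (xs : bvec d) (lams : vec m)
  (Hsaddle_feas : Aop A xs = b)
  (Hsaddle_sub : forall i,
      subgrad (fi (g i) (h i)) (xs i) (vscale (-1) (ladj (A i) lams)))
  (X : bvec d -> Prop) (DX : R)
  (HXb : bounded_set (@bnorm n d) X)
  (HXs : X xs) (HXz : forall k, X (z k))
  (HDX : is_diam (fun u v => bnorm (bsub u v)) X DX)
  (Lam : vec m -> Prop) (DL : R)
  (HLb : bounded_set (@vnorm m) Lam)
  (HLs : Lam lams) (HLl : forall k, Lam (lam k))
  (HDL : is_diam (fun u v => vnorm (vsub u v)) Lam DL)
  (K : nat) (HK : (0 < K)%nat) :
  let alpha := \big[Rmin/(1 / (INR n + 1))]_(i < n)
      ((eta i - INR n * (nA i) ^ 2) / (2 * (INR n + 1) * (nA i) ^ 2)) in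
  let Lmax := \big[Rmax/0]_(i < n) L i in
  let etamax := \big[Rmax/0]_(i < n) eta i in
  let res := vsub (Aop A (x (S K))) b in
  ele (eadd (ftot g h (x (S K)))
            (Fin (- real_of (ftot g h xs) + dot lams res
                  + beta * alpha / 2 * (vnorm res) ^ 2)))
      (Fin (2 * Lmax * (bnorm (bsub (z 0%nat) xs)) ^ 2 / (INR K + 2) ^ 2
            + 2 * beta * etamax * DX ^ 2 / (INR K + 2)
            + 2 * DL ^ 2 / (beta * (INR K + 2)))).
Proof.
move=> alpha Lmax etamax res.
have Hth := theta_props Htheta0 Htheta.
have Hrel := theta_rel Htheta0 Htheta.
have HnN : 0 <= INR n by apply: pos_INR.
have Heta0 : forall i, 0 < eta i.
  move=> i; have := Heta i; have := pow2_ge_0 (nA i); nra.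
pose hsv := fun i => real_of (h i (xs i)).
have Hhs : forall i, h i (xs i) = Fin (hsv i).
  move=> i; rewrite /hsv; have [a [Ha _]] := Hsaddle_sub i.
  move: Ha; rewrite /fi; by case: (h i (xs i)).
have Hal1 : alpha <= 1 / (INR n + 1) by apply: bigmin_le_init.
have Hal2 : forall i, alpha <= (eta i - INR n * (nA i) ^ 2) / (2 * (INR n + 1) * (nA i) ^ 2).
  by move=> i; apply: bigmin_le.
have Hal0 : 0 <= alpha.
  rewrite /alpha; apply: (big_ind (fun v => 0 <= v)).
  - apply: Rlt_le; apply: Rdiv_lt_0_compat; lra.
  - by move=> a c Ha Hc; apply: Rmin_glb.
  - move=> i _. have := Heta i. have := pow2_ge_0 (nA i) => H1 H2.
    destruct (Req_dec (nA i ^ 2) 0) as [E|E].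
    + rewrite E !Rmult_0_r Rdiv_0_r; lra.
    + apply: Rmult_le_pos; first lra.
      apply: Rlt_le; apply: Rinv_0_lt_compat. nra.
have Hal_lt1 : alpha <= 1.
  apply: Rle_trans Hal1 _. apply: (Rmult_le_reg_r (INR n + 1)); first lra.
  rewrite /Rdiv Rmult_assoc Rinv_l; lra.
have Hna : forall i, INR n * nA i ^ 2 <= (1 - alpha) * eta i.
  move=> i; have := Hal2 i; have := Heta i; have := Heta0 i.
  set a := nA i ^ 2; set N := INR n; set e := eta i.
  have Ha : 0 <= a by apply: pow2_ge_0.
  have HN0 : 0 <= N by apply: pos_INR.
  move=> He0 He Hal.
  destruct (Req_dec a 0) as [E|E]; first by rewrite E Rmult_0_r; apply: Rmult_le_pos; lra.
  have Hap : 0 < a by lra.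
  have Hq : (e - N * a) / (2 * (N + 1) * a) * (2 * (N + 1) * a) = e - N * a
    by field; split; [exact: E|apply: Rgt_not_eq; lra].
  destruct (Rle_lt_dec e (2 * (N + 1) * a)) as [Hc|Hc].
  + have : alpha * (2 * (N + 1) * a) <= e - N * a by nra.
    nra.
  + have Hq1 : 1 / (N + 1) * (N + 1) = 1 by field; lra.
    have Hal1n : alpha <= 1 / (N + 1) by exact: Hal1.
    have : alpha * (N + 1) <= 1 by nra.
    nra.
have Hblock : forall k i, (theta k < 1 -> exists a, h i (x k i) = Fin a) ->
  (exists a, h i (x (S k) i) = Fin a) /\
  g i (x (S k) i) + real_of (h i (x (S k) i)) <=
    (1 - theta k) * (g i (x k i) + real_of (h i (x k i))) + theta k * (g i (xs i) + hsv i)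
    - theta k * dot (vadd (lam k) (vscale beta (vsub (Aop A (z k)) b)))
                    (lapp (A i) (vsub (z (S k) i) (xs i)))
    + theta k * (L i * theta k + beta * eta i) / 2 *
        (sqn (vsub (xs i) (z k i)) - sqn (vsub (xs i) (z (S k) i)))
    - theta k * (beta * eta i) / 2 * sqn (vsub (z (S k) i) (z k i)).
  move=> k i Hk.
  have [Hth0 _] := Hth k.
  have Hbe : 0 <= beta * eta i by have := Heta0 i; nra.
  have := block_step (Hg_conv i) (Hg_grad i) (Hg_lip i) (proj1 (Hh i)) (proj1 (proj2 (Hh i)))
     Hth0 (Rlt_le _ _ (HL i)) Hbe Hk (Hhs i) (Hy k i) (Hx k i) (Hz k i).
  by rewrite lin_identity.
have Hfin : forall k i, exists a, h i (x (S k) i) = Fin a.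
  elim => [|k IH] i.
    apply: (proj1 (Hblock 0%nat i _)); rewrite Htheta0; lra.
  by apply: (proj1 (Hblock (S k) i _)) => _; exact: IH i.
have Hprev : forall k i, theta k < 1 -> exists a, h i (x k i) = Fin a.
  case => [|k] i; first by rewrite Htheta0; lra.
  by move=> _; exact: Hfin.
pose Fb := fun v : bvec d => \big[Rplus/0]_(i < n) (g i (v i) + real_of (h i (v i))).
pose rk := fun k => vsub (Aop A (x k)) b.
pose Psi := fun k => Fb (x k) - Fb xs + dot lams (rk k) + beta * alpha / 2 * sqn (rk k).
pose P := fun k => \big[Rplus/0]_(i < n) (L i / 2 * sqn (vsub (xs i) (z k i))).
pose Rr := fun k => \big[Rplus/0]_(i < n) (beta * eta i / 2 * sqn (vsub (xs i) (z k i))).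
pose E := fun k => sqn (vsub lams (lam k)).
have Hrec : forall k, Psi (S k) <= (1 - theta k) * Psi k + theta k ^ 2 * (P k - P (S k))
    + theta k * ((E k - E (S k)) / (2 * beta) + Rr k - Rr (S k)).
  move=> k.
  have [[Ht0 Ht1] _] := Hth k.
  set t := theta k.
  have Ht0t : 0 < t := Ht0. have Ht1t : t <= 1 := Ht1.
  set lh := vadd (lam k) (vscale beta (vsub (Aop A (z k)) b)).
  set rp := vsub (Aop A (z (S k))) b.
  pose S1 := \big[Rplus/0]_(i<n) (g i (xs i) + hsv i).
  pose S2 := \big[Rplus/0]_(i<n) dot lh (lapp (A i) (vsub (z (S k) i) (xs i))).
  pose S3 := \big[Rplus/0]_(i<n) ((L i * t + beta * eta i) / 2 *
        (sqn (vsub (xs i) (z k i)) - sqn (vsub (xs i) (z (S k) i)))).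
  pose S5 := \big[Rplus/0]_(i<n) (eta i * sqn (vsub (z (S k) i) (z k i))).
  have HB : Fb (x (S k)) <= (1 - t) * Fb (x k) + t * S1 - t * S2 + t * S3 - t * (beta / 2 * S5).
    have -> : (1 - t) * Fb (x k) + t * S1 - t * S2 + t * S3 - t * (beta / 2 * S5) =
      \big[Rplus/0]_(i<n) ((1 - t) * (g i (x k i) + real_of (h i (x k i))) + t * (g i (xs i) + hsv i)
        - t * dot lh (lapp (A i) (vsub (z (S k) i) (xs i)))
        + t * (L i * t + beta * eta i) / 2 *
          (sqn (vsub (xs i) (z k i)) - sqn (vsub (xs i) (z (S k) i)))
        - t * (beta * eta i) / 2 * sqn (vsub (z (S k) i) (z k i))).
      rewrite /Fb /S1 /S2 /S3 /S5; cbv beta; sumify; apply: sum_ext => i; field.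
    apply: sum_le => i; exact: (proj2 (Hblock k i (Hprev k i))).
  have HS2 : S2 = dot lh rp.
    rewrite /S2 /rp -Hsaddle_feas -Aop_sub dot_Aop; done.
  have HS3 : S3 = t * (P k - P (S k)) + (Rr k - Rr (S k)).
    rewrite /S3 /P /Rr; cbv beta; sumify; apply: sum_ext => i; field.
  have Erk : rk (S k) = vadd (vscale (1 - t) (rk k)) (vscale t rp).
    rewrite /rk /rp (Aop_comb A (Hx k)).
    apply: functional_extensionality => r; rewrite /vsub /vadd /vscale; cbv beta; rewrite /t; ring.
  have Hb : dot lams (rk (S k)) = (1 - t) * dot lams (rk k) + t * dot lams rp.
    rewrite Erk /dot /vadd /vscale; sumify; apply: sum_ext => r; ring.
  have Hc : sqn (rk (S k)) <= (1 - t) * sqn (rk k) + t * sqn rp.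
    rewrite Erk /sqn /dot /vadd /vscale; sumify; apply: sum_le => r.
    have := pow2_ge_0 (rk k r - rp r). move=> Hsq; have := Rmult_le_pos _ _ (Rmult_le_pos _ _ (Rlt_le _ _ Ht0t) (ltac:(lra) : 0 <= 1 - t)) Hsq; nra.
  set wv := vsub (Aop A (z (S k))) (Aop A (z k)).
  have Hd1 : dot lams rp - dot lh rp =
      (E k - E (S k)) / (2 * beta) - beta / 2 * sqn rp + beta * dot wv rp.
    rewrite /E Hlam /lh /rp /wv /sqn /dot /vsub /vadd /vscale /Rdiv; sumify.
    apply: sum_ext => r; field; apply: Rgt_not_eq; lra.
  have Hd3 : sqn wv <= (1 - alpha) * S5.
    rewrite /wv -Aop_sub.
    apply: Rle_trans (sqn_Aop _ _) _.
    rewrite /S5 sum_scal sum_scal; apply: sum_le => i.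
    rewrite /bsub.
    set w := vsub (z (S k) i) (z k i).
    have H1 := opnorm_bound w (HnA i).
    have H2 := vnorm_ge0 (lapp (A i) w).
    have H3 := vnorm_ge0 w.
    have H4 := opnorm_ge0 (HnA i).
    have H5 : vnorm (lapp (A i) w) ^ 2 <= (nA i * vnorm w) ^ 2 by apply: pow_incr; lra.
    rewrite vnorm_sq Rpow_mult_distr vnorm_sq in H5.
    have HW : 0 <= sqn w by apply: dot_ge0.
    rewrite /sqn; have := Hna i. rewrite /sqn in HW. nra.
  have Hd2 : beta * dot wv rp - (1 - alpha) * beta / 2 * sqn rp <= beta / 2 * S5.
    have HS5 : 0 <= S5.
      apply: sum_ge0 => i; have := Heta0 i; have := dot_ge0 (vsub (z (S k) i) (z k i)).
      rewrite /sqn; nra.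
    have Hr0 : 0 <= sqn rp by apply: dot_ge0.
    destruct (Req_dec alpha 1) as [Ea|Ea].
    - rewrite Ea in Hd3 *.
      have Hw0 : sqn wv <= 0 by lra.
      have Hvw : vnorm wv = 0.
        have := vnorm_sq wv; have := vnorm_ge0 wv; rewrite /sqn in Hw0; nra.
      have := cs wv rp; rewrite Hvw Rmult_0_l => Hdot.
      nra.
    - have Hpos : 0 < 1 - alpha by lra.
      have Hsq : 0 <= sqn (vsub wv (vscale (1 - alpha) rp)) by apply: dot_ge0.
      have Ex : sqn (vsub wv (vscale (1 - alpha) rp)) =
          sqn wv - 2 * (1 - alpha) * dot wv rp + (1 - alpha) ^ 2 * sqn rp.
        rewrite /sqn /dot /vsub /vscale; sumify; apply: sum_ext => r; ring.
      rewrite Ex in Hsq.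
      have : 2 * (1 - alpha) * dot wv rp <= (1 - alpha) * S5 + (1 - alpha) ^ 2 * sqn rp by lra.
      move=> H.
      have : 2 * dot wv rp <= S5 + (1 - alpha) * sqn rp.
        apply: (Rmult_le_reg_l (1 - alpha)); first lra. nra.
      nra.
  have Hba : 0 <= beta * alpha / 2 by nra.
  have Hc' := Rmult_le_compat_l _ _ _ Hba Hc.
  have Hd2' := Rmult_le_compat_l _ _ _ (Rlt_le _ _ Ht0) Hd2.
  rewrite /Psi Hb HS2 in HB *.
  rewrite HS3 in HB.
  have EFs : Fb xs = S1 by [].
  rewrite EFs.
  nra.
pose M := DL ^ 2 / (2 * beta) + beta * etamax / 2 * DX ^ 2.
pose Q := fun k => E k / (2 * beta) + Rr k.
have HP0 : forall k, 0 <= P k.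
  move=> k; apply: sum_ge0 => i; apply: Rmult_le_pos; last exact: dot_ge0.
  have := HL i; nra.
have HR0 : forall k, 0 <= Rr k.
  move=> k; apply: sum_ge0 => i; apply: Rmult_le_pos; last exact: dot_ge0.
  have := Heta0 i; nra.
have HE0 : forall k, 0 <= E k by move=> k; apply: dot_ge0.
have HQ0 : forall k, 0 <= Q k.
  move=> k; rewrite /Q; have := HE0 k; have := HR0 k.
  have : 0 <= E k / (2 * beta) by apply: Rmult_le_pos; [apply: HE0 | apply: Rlt_le; apply: Rinv_0_lt_compat; lra].
  lra.
have HDL0 : 0 <= DL.
  apply: Rle_trans (vnorm_ge0 (vsub lams lams)) _.
  apply: (proj1 HDL); exists lams, lams; done.
have HDX0 : 0 <= DX.
  apply: Rle_trans (sqrt_pos (bdot (bsub xs xs) (bsub xs xs))) _.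
  apply: (proj1 HDX); exists xs, xs; done.
have Hetamax : forall i, eta i <= etamax by move=> i; apply: bigmax_ge.
have Hetamax0 : 0 <= etamax by apply: bigmax_ge_init.
have HQM : forall k, Q k <= M.
  move=> k; rewrite /Q /M.
  have HEk : E k <= DL ^ 2.
    have Hn : vnorm (vsub lams (lam k)) <= DL.
      apply: (proj1 HDL); exists lams, (lam k); done.
    change (E k) with (dot (vsub lams (lam k)) (vsub lams (lam k))); rewrite -vnorm_sq; apply: pow_incr; split; [apply: vnorm_ge0|done].
  have HRk : Rr k <= beta * etamax / 2 * DX ^ 2.
    have Hn : bnorm (bsub xs (z k)) <= DX.
      apply: (proj1 HDX); exists xs, (z k); done.
    have Hb0 : 0 <= bdot (bsub xs (z k)) (bsub xs (z k)).
      apply: sum_ge0 => i; apply: dot_ge0.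
    have Hbb : bdot (bsub xs (z k)) (bsub xs (z k)) <= DX ^ 2.
      have <- : bnorm (bsub xs (z k)) ^ 2 = bdot (bsub xs (z k)) (bsub xs (z k)).
        by rewrite /bnorm pow2_sqrt.
      apply: pow_incr; split; [apply: sqrt_pos|done].
    apply: (Rle_trans _ (beta * etamax / 2 * bdot (bsub xs (z k)) (bsub xs (z k)))).
      rewrite /Rr /bdot sum_scal; apply: sum_le => i.
      rewrite /sqn; apply: Rmult_le_compat_r; first exact: dot_ge0.
      have := Hetamax i; nra.
    apply: Rmult_le_compat_l; [nra|done].
  have : E k / (2 * beta) <= DL ^ 2 / (2 * beta).
    apply: Rmult_le_compat_r; [apply: Rlt_le; apply: Rinv_0_lt_compat; lra|done].
  lra.
have HC : forall K0, Psi (S K0) <= theta K0 ^ 2 * (P 0%nat - P (S K0)) + theta K0 * (M - Q (S K0)).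
  elim => [|K0 IH].
  - have := Hrec 0%nat; rewrite Htheta0.
    have := HQM 0%nat.
    have EQ : forall k, (E k - E (S k)) / (2 * beta) + Rr k - Rr (S k) = Q k - Q (S k).
      by move=> k; rewrite /Q; field; apply: Rgt_not_eq; lra.
    rewrite EQ. nra.
  - have := Hrec (S K0).
    have EQ : (E (S K0) - E (S (S K0))) / (2 * beta) + Rr (S K0) - Rr (S (S K0)) = Q (S K0) - Q (S (S K0)).
      by rewrite /Q; field; apply: Rgt_not_eq; lra.
    rewrite EQ.
    have [[Ht0 Ht1] _] := Hth K0.
    have [A1 [A2 [A3 [A4 A5]]]] := theta_step (conj Ht0 Ht1) (Htheta K0).
    set t := theta K0 in IH Ht0 Ht1 A1 A2 A3 A4 A5 *.
    set t' := theta (S K0) in A1 A2 A3 A4 A5 *.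
    have HY := HQM (S K0).
    have H1 := Rmult_le_compat_l (1 - t') _ _ ltac:(lra) IH.
    have Hc : (1 - t') * t <= t'.
      apply: (Rmult_le_reg_r t) => //. nra.
    have H2 : 0 <= (t' - (1 - t') * t) * (M - Q (S K0)) by apply: Rmult_le_pos; lra.
    have H3 : (1 - t') * (t ^ 2 * (P 0%nat - P (S K0))) = t' ^ 2 * (P 0%nat - P (S K0)) by rewrite A3; ring.
    move=> H4. nra.
have Hx1 : ftot g h (x (S K)) = Fin (Fb (x (S K))) by apply: ftot_fin; exact: Hfin.
have Hxs : ftot g h xs = Fin (Fb xs) by apply: ftot_fin => i; exists (hsv i); exact: Hhs.
rewrite Hx1 Hxs; cbn [eadd ele real_of].
have Hres : res = rk (S K) by [].
rewrite Hres vnorm_sq.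
have HPs : Fb (x (S K)) + (- Fb xs + dot lams (rk (S K)) + beta * alpha / 2 * dot (rk (S K)) (rk (S K)))
   = Psi (S K) by rewrite /Psi /sqn; ring.
rewrite HPs.
have [[Ht0 Ht1] Ht2] := Hth K.
set t := theta K in Ht0 Ht1 Ht2 *.
have HCK := HC K. rewrite -/t in HCK.
have HLmax0 : 0 <= Lmax by apply: bigmax_ge_init.
set B := bnorm (bsub (z 0%nat) xs).
have HPB : P 0%nat <= Lmax / 2 * B ^ 2.
  have -> : B ^ 2 = bdot (bsub (z 0%nat) xs) (bsub (z 0%nat) xs).
    rewrite /B /bnorm pow2_sqrt //; apply: sum_ge0 => i; apply: dot_ge0.
  rewrite /P /bdot sum_scal; apply: sum_le => i.
  have -> : sqn (vsub (xs i) (z 0%nat i)) = dot (vsub (z 0%nat i) (xs i)) (vsub (z 0%nat i) (xs i)).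
    rewrite /sqn /dot /vsub; apply: sum_ext => j; ring.
  apply: Rmult_le_compat_r; first exact: dot_ge0.
  have : L i <= Lmax by apply: bigmax_ge.
  lra.
have HP0' := HP0 0%nat. have HPK := HP0 (S K). have HQK := HQ0 (S K).
have HM0 : 0 <= M by have := HQM 0%nat; have := HQ0 0%nat; lra.
have HK0 : 0 <= INR K by apply: pos_INR.
set T := INR K + 2 in Ht2 *.
have HT : 0 < T by rewrite /T; lra.
have Htt : t * T <= 2.
  have := Rmult_le_compat_r T _ _ ltac:(lra) Ht2.
  rewrite /Rdiv Rmult_assoc Rinv_l; lra.
have Hfin1 : t ^ 2 * P 0%nat <= 2 * Lmax * B ^ 2 / T ^ 2.
  have -> : 2 * Lmax * B ^ 2 / T ^ 2 = (2 / T) ^ 2 * (Lmax / 2 * B ^ 2) by field; lra.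
  apply: (Rle_trans _ ((2 / T) ^ 2 * P 0%nat)).
    apply: Rmult_le_compat_r => //. apply: pow_incr; lra.
  apply: Rmult_le_compat_l => //. apply: pow2_ge_0.
have Hfin2 : t * M <= 2 * beta * etamax * DX ^ 2 / T + 2 * DL ^ 2 / (beta * T).
  apply: (Rle_trans _ (2 / T * M)).
    by apply: Rmult_le_compat_r.
  have -> : 2 / T * M = beta * etamax * DX ^ 2 / T + DL ^ 2 / (beta * T)
    by rewrite /M; field; split; apply: Rgt_not_eq; lra.
  have : 0 <= beta * etamax * DX ^ 2 / T.
    apply: Rmult_le_pos; last by apply: Rlt_le; apply: Rinv_0_lt_compat.
    apply: Rmult_le_pos; [apply: Rmult_le_pos; lra | exact: pow2_ge_0].
  have : 0 <= DL ^ 2 / (beta * T).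
    apply: Rmult_le_pos; first exact: pow2_ge_0.
    apply: Rlt_le; apply: Rinv_0_lt_compat; nra.
  have -> : 2 * beta * etamax * DX ^ 2 / T = 2 * (beta * etamax * DX ^ 2 / T) by field; lra.
  have -> : 2 * DL ^ 2 / (beta * T) = 2 * (DL ^ 2 / (beta * T)) by field; split; apply: Rgt_not_eq; lra.
  lra.
have : t ^ 2 * (P 0%nat - P (S K)) + t * (M - Q (S K)) <= t ^ 2 * P 0%nat + t * M.
  have := pow2_ge_0 t; nra.
lra.
Qed.
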